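(* Let $\mathscr T$ be a functor satisfying (T1)–(T4), and let $\Gamma\colon\mathbb{COL}\to\mathscr T\mathbb{ODA}$ and $\Psi\colon\mathscr T\mathbb{ODA}\to\mathbb{COL}$ be as described below. For each complete orthomodular lattice $\mathcal M$ define $\mu_{\mathcal M}\colon\mathcal M\to\Psi(\Gamma(\mathcal M))$ by $\mu_{\mathcal M}(m)=\{\pi_m\}$. Then $\mu=(\mu_{\mathcal M})_{\mathcal M}$ is a natural isomorphism $1_{\mathbb{COL}}\Rightarrow\Psi\circ\Gamma$.
   Context: $\Gamma(\mathcal M)=\mathscr P(\mathscr T(\mathbf{Lin}(\mathcal M)))$, $\Gamma(k)(A)=\{k\circ a\circ k^{-1}\mid a\in A\}$; $\Psi(\mathfrak K)=(\widetilde K,\preceq,{}^\perp)$, $\Psi(\phi)=\phi|_{\widetilde K}$. An involutive unital quantale is $(Q,\bigsqcup,\odot,{}^*,e)$: complete join-semilattice $Q$, associative $\odot$ distributing over arbitrary joins in each argument, unit $e$, ${}^*$ with $x^{**}=x$, $(x\odot y)^*=y^*\odot x^*$, $(\bigsqcup x_i)^*=\bigsqcup x_i^*$. An involutive generalized dynamic algebra (IDA) is such a quantale with ${\sim}\colon K\to K$ satisfying, for all $x,y$ and families $(x_i)$: ${\sim}(x\odot{\sim}{\sim}y)={\sim}(x\odot y)$; ${\sim}(\bigsqcup{\sim}{\sim}x_i)={\sim}(\bigsqcup x_i)$; $({\sim}x)^*={\sim}x$; ${\sim}{\sim}({\sim}{\sim}x\odot y)={\sim}({\sim}x\sqcup{\sim}({\sim}x\sqcup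 y))$. Test set $\widetilde K=\{{\sim}k\}$; $\bigvee W={\sim}{\sim}\bigsqcup W$; $w^\perp={\sim}w$; $k\preceq l$ iff $\bigvee\{k,l\}=l$; $k\bullet v={\sim}{\sim}(k\odot v)$; $k\equiv l$ iff $k\bullet w=l\bullet w$ for all $w\in\widetilde K$. IDA morphisms preserve arbitrary joins, $\odot$, ${}^*$, unit, ${\sim}$ (category $\mathbb{IDA}$); semi-Foulis means $(\widetilde K,\preceq,{}^\perp)$ is a complete orthomodular lattice. $\mathbb{IM}$: involutive monoids and homomorphisms. For a complete orthomodular lattice $\mathcal M$: $\pi_m(x)=m\wedge(m^\perp\vee x)$; $\mathbf{Lin}(\mathcal M)$ is the set of maps $f$ admitting $f^*$ with $f(x)\le y^\perp\iff x\le f^*(y)^\perp$, an IDA under pointwise joins, composition, ${}^*$, $\mathrm{id}$, ${\sim}f=\pi_{f(1)^\perp}$. For an involutive submonoid $L\supseteq\{\pi_m\}$, $\mathscr P(L)$ is the IDA of subsets of $L$ with union, setwise composition and involution, unit $\{\mathrm{id}\}$, ${\sim}A=\{\pi_{(\bigvee_{a\in A}a(1))^\perp}\}$. $\mathscr T\colon\mathbb{IDA}\to\mathbb{IM}$ satisfies: (T1) $\widetilde K\subseteq\mathscr T(K)\subseteq K$, $\mathscr T(K)$ an involutive submonoid; (T2) for semi-Foulis $\mathfrak K$ with $s=t\iff s\equiv t$ on $\mathscr T(K)$, $k\mapsto k\bullet(-)$ is an isomorphism $\mathscr T(\mathfrak K)\to\mathscr T(\mathbf{Lin}(\widetilde{\mathfrak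 K}))$; (T3) $f\mapsto\{f\}$ is an isomorphism $\mathscr T(\mathbf{Lin}(\mathcal M))\to\mathscr T(\mathscr P(\mathscr T(\mathbf{Lin}(\mathcal M))))$; (T4) $\mathscr T(f)$ is the restriction of $f$. A $\mathscr T$-based orthomodular dynamic algebra is an IDA with: (TODA1) $(\widetilde K,\preceq,{}^\perp)$ a complete orthomodular lattice; (TODA2) every $A$ with $\mathscr T(K)\subseteq A\subseteq K$ closed under $\odot$, ${}^*$, arbitrary joins equals $K$; (TODA3) for $S,T\subseteq\mathscr T(K)$, $\bigsqcup S=\bigsqcup T$ iff $S=T$; (TODA4) for $s,t\in\mathscr T(K)$, $s=t$ iff $s\equiv t$. $\mathscr T\mathbb{ODA}$: these objects with bijective IDA morphisms. $\mathbb{COL}$: complete orthomodular lattices with ortholattice isomorphisms (bijections $g$ with $m\le n\iff g(m)\le g(n)$, $g(m^\perp)=g(m)^\perp$). *)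

(* Defs.v *)
From Stdlib Require Import ClassicalEpsilon.
Unset Implicit Arguments.

Definition pair2 {X : Type} (x y : X) : X -> Prop := fun z => z = x \/ z = y.
Definition image {X Y : Type} (f : X -> Y) (S : X -> Prop) : Y -> Prop :=
  fun y => exists x, S x /\ y = f x.

Definition is_lub {X : Type} (D : X -> Prop) (le : X -> X -> Prop)
  (S : X -> Prop) (u : X) : Prop :=
  D u /\ (forall x, S x -> le x u) /\
  (forall v, D v -> (forall x, S x -> le x v) -> le u v).
Definition is_glb {X : Type} (D : X -> Prop) (le : X -> X -> Prop)
  (S : X -> Prop) (u : X) : Prop :=
  D u /\ (forall x, S x -> le u x) /\
  (forall v, D v -> (forall x, S x -> le v x) -> le v u).

Record is_coml_on {X : Type} (D : X -> Prop) (le : X -> X -> Prop)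
  (oc : X -> X) : Prop := {
  coml_refl : forall x, D x -> le x x;
  coml_anti : forall x y, D x -> D y -> le x y -> le y x -> x = y;
  coml_trans : forall x y z, D x -> D y -> D z -> le x y -> le y z -> le x z;
  coml_lub : forall S, (forall x, S x -> D x) -> exists u, is_lub D le S u;
  coml_oc_closed : forall x, D x -> D (oc x);
  coml_oc_invol : forall x, D x -> oc (oc x) = x;
  coml_oc_anti : forall x y, D x -> D y -> le x y -> le (oc y) (oc x);
  coml_oc_top : forall x t, D x -> is_lub D le D t ->
                 is_lub D le (pair2 x (oc x)) t;
  coml_orthomod : forall x y m, D x -> D y -> le x y ->
                 is_glb D le (pair2 y (oc x)) m -> is_lub D le (pair2 x m) y
}.

(* A complete orthomodular lattice, presented as a subset of a type. *)
Record col : Type := {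
  ccar : Type;
  cdom : ccar -> Prop;
  cle : ccar -> ccar -> Prop;
  coc : ccar -> ccar;
  cax : is_coml_on cdom cle coc
}.

Definition pt (M : col) : Type := {x : ccar M | cdom M x}.
Definition ple (M : col) (x y : pt M) : Prop := cle M (proj1_sig x) (proj1_sig y).
Definition poc (M : col) (x : pt M) : pt M :=
  exist _ (coc M (proj1_sig x)) (coml_oc_closed _ _ _ (cax M) _ (proj2_sig x)).

Definition pt_inh (M : col) : inhabited (pt M) :=
  match coml_lub _ _ _ (cax M) (fun _ => False) (fun x (H : False) => False_ind _ H)
  with ex_intro _ u (conj Hu _) => inhabits (exist _ u Hu) end.

Definition psup (M : col) (S : pt M -> Prop) : pt M :=
  epsilon (pt_inh M) (fun u => is_lub (fun _ => True) (ple M) S u).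
Definition pinf (M : col) (S : pt M -> Prop) : pt M :=
  psup M (fun x => forall y, S y -> ple M x y).
Definition ptop (M : col) : pt M := psup M (fun _ => True).
Definition pjoin2 (M : col) (a b : pt M) : pt M := psup M (pair2 a b).
Definition pmeet2 (M : col) (a b : pt M) : pt M := pinf M (pair2 a b).

Definition sasaki (M : col) (m : pt M) : pt M -> pt M :=
  fun x => pmeet2 M m (pjoin2 M (poc M m) x).

Definition col_iso (M N : col) (g : pt M -> pt N) (h : pt N -> pt M) : Prop :=
  (forall x, h (g x) = x) /\ (forall y, g (h y) = y) /\
  (forall m n, ple M m n <-> ple N (g m) (g n)) /\
  (forall m, g (poc M m) = poc N (g m)).

Record ida : Type := {
  icar : Type;
  idom : icar -> Prop;
  ijoin : (icar -> Prop) -> icar;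
  imul : icar -> icar -> icar;
  istar : icar -> icar;
  ione : icar;
  itil : icar -> icar
}.

Definition ida_le (K : ida) (x y : icar K) : Prop := ijoin K (pair2 x y) = y.
Definition sub_dom (K : ida) (S : icar K -> Prop) : Prop :=
  forall x, S x -> idom K x.

Record is_ida (K : ida) : Prop := {
  ida_one_dom : idom K (ione K);
  ida_mul_dom : forall x y, idom K x -> idom K y -> idom K (imul K x y);
  ida_star_dom : forall x, idom K x -> idom K (istar K x);
  ida_til_dom : forall x, idom K x -> idom K (itil K x);
  ida_join_dom : forall S, sub_dom K S -> idom K (ijoin K S);
  ida_le_refl : forall x, idom K x -> ida_le K x x;
  ida_le_anti : forall x y, idom K x -> idom K y ->
                ida_le K x y -> ida_le K y x -> x = y;
  ida_le_trans : forall x y z, idom K x -> idom K y -> idom K z ->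
                ida_le K x y -> ida_le K y z -> ida_le K x z;
  ida_join_lub : forall S, sub_dom K S -> is_lub (idom K) (ida_le K) S (ijoin K S);
  ida_mulA : forall x y z, idom K x -> idom K y -> idom K z ->
             imul K (imul K x y) z = imul K x (imul K y z);
  ida_mul_joinr : forall x S, idom K x -> sub_dom K S ->
             imul K x (ijoin K S) = ijoin K (image (imul K x) S);
  ida_mul_joinl : forall x S, idom K x -> sub_dom K S ->
             imul K (ijoin K S) x = ijoin K (image (fun s => imul K s x) S);
  ida_mul1l : forall x, idom K x -> imul K (ione K) x = x;
  ida_mul1r : forall x, idom K x -> imul K x (ione K) = x;
  ida_starK : forall x, idom K x -> istar K (istar K x) = x;
  ida_star_mul : forall x y, idom K x -> idom K y ->
             istar K (imul K x y) = imul K (istar K y) (istar K x);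
  ida_star_join : forall S, sub_dom K S ->
             istar K (ijoin K S) = ijoin K (image (istar K) S);
  ida_til1 : forall x y, idom K x -> idom K y ->
             itil K (imul K x (itil K (itil K y))) = itil K (imul K x y);
  ida_til2 : forall S, sub_dom K S ->
             itil K (ijoin K (image (fun x => itil K (itil K x)) S)) = itil K (ijoin K S);
  ida_til3 : forall x, idom K x -> istar K (itil K x) = itil K x;
  ida_til4 : forall x y, idom K x -> idom K y ->
             itil K (itil K (imul K (itil K (itil K x)) y)) =
             itil K (ijoin K (pair2 (itil K x)
                        (itil K (ijoin K (pair2 (itil K x) y)))))
}.

Definition ida_morph (K K' : ida) (f : icar K -> icar K') : Prop :=
  (forall x, idom K x -> idom K' (f x)) /\
  (forall S, sub_dom K S -> f (ijoin K S) = ijoin K' (image f S)) /\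
  (forall x y, idom K x -> idom K y -> f (imul K x y) = imul K' (f x) (f y)) /\
  (forall x, idom K x -> f (istar K x) = istar K' (f x)) /\
  f (ione K) = ione K' /\
  (forall x, idom K x -> f (itil K x) = itil K' (f x)).

Definition test (K : ida) (k : icar K) : Prop := exists j, idom K j /\ k = itil K j.
Definition tle (K : ida) (k l : icar K) : Prop :=
  itil K (itil K (ijoin K (pair2 k l))) = l.
Definition bullet (K : ida) (k v : icar K) : icar K := itil K (itil K (imul K k v)).
Definition tequiv (K : ida) (k l : icar K) : Prop :=
  forall w, test K w -> bullet K k w = bullet K l w.
Definition semiFoulis (K : ida) : Prop := is_coml_on (test K) (tle K) (itil K).

(* Psi on objects: the complete OML of tests of a semi-Foulis IDA *)
Definition tests_col (K : ida) (HF : semiFoulis K) : col :=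
  {| ccar := icar K; cdom := test K; cle := tle K; coc := itil K; cax := HF |}.

Definition adjoint (M : col) (f g : pt M -> pt M) : Prop :=
  forall x y, ple M (f x) (poc M y) <-> ple M x (poc M (g y)).

Definition Lin (M : col) : ida := {|
  icar := pt M -> pt M;
  idom := fun f => exists g, adjoint M f g;
  ijoin := fun F x => psup M (image (fun f => f x) F);
  imul := fun f g x => f (g x);
  istar := fun f => epsilon (inhabits f) (fun g => adjoint M f g);
  ione := fun x => x;
  itil := fun f => sasaki M (poc M (f (ptop M)))
|}.

Definition Pow (M : col) (L : (pt M -> pt M) -> Prop) : ida := {|
  icar := (pt M -> pt M) -> Prop;
  idom := fun A => forall f, A f -> L f;
  ijoin := fun S f => exists A, S A /\ A f;
  imul := fun A B h => exists a b, A a /\ B b /\ h = (fun x => a (b x));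
  istar := fun A => image (istar (Lin M)) A;
  ione := fun h => h = (fun x => x);
  itil := fun A h =>
    h = sasaki M (poc M (psup M (image (fun a : pt M -> pt M => a (ptop M)) A)))
|}.

Definition single {X : Type} (x : X) : X -> Prop := fun y => y = x.

(* The functor T : IDA -> IM, given by its object part T(K) ⊆ K
   (its morphism part is restriction, (T4)). *)
Definition Tfun : Type := forall K : ida, icar K -> Prop.

Definition T1 (T : Tfun) : Prop :=
  forall K : ida, is_ida K ->
    (forall k, test K k -> T K k) /\
    (forall k, T K k -> idom K k) /\
    T K (ione K) /\
    (forall x y, T K x -> T K y -> T K (imul K x y)) /\
    (forall x, T K x -> T K (istar K x)).

Definition T2 (T : Tfun) : Prop :=
  forall (K : ida) (HK : is_ida K) (HF : semiFoulis K),
    (forall s t, T K s -> T K t -> (s = t <-> tequiv K s t)) ->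
    exists Phi : icar K -> (pt (tests_col K HF) -> pt (tests_col K HF)),
      (forall k w, T K k -> proj1_sig (Phi k w) = bullet K k (proj1_sig w)) /\
      (forall k, T K k -> T (Lin (tests_col K HF)) (Phi k)) /\
      (forall k l, T K k -> T K l -> Phi k = Phi l -> k = l) /\
      (forall f, T (Lin (tests_col K HF)) f -> exists k, T K k /\ Phi k = f) /\
      (forall k l, T K k -> T K l ->
         Phi (imul K k l) = imul (Lin (tests_col K HF)) (Phi k) (Phi l)) /\
      (forall k, T K k -> Phi (istar K k) = istar (Lin (tests_col K HF)) (Phi k)) /\
      Phi (ione K) = ione (Lin (tests_col K HF)).

Definition T3 (T : Tfun) : Prop :=
  forall M : col,
    let L := Lin M in
    let P := Pow M (T L) in
    (forall f, T L f -> T P (single f)) /\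
    (forall f g, T L f -> T L g -> single f = single g -> f = g) /\
    (forall A, T P A -> exists f, T L f /\ A = single f) /\
    (forall f g, T L f -> T L g ->
       single (imul L f g) = imul P (single f) (single g)) /\
    (forall f, T L f -> single (istar L f) = istar P (single f)) /\
    single (ione L) = ione P.

Definition T4 (T : Tfun) : Prop :=
  forall (K K' : ida) (f : icar K -> icar K'),
    is_ida K -> is_ida K' -> ida_morph K K' f ->
    forall x, T K x -> T K' (f x).

Definition Gam (T : Tfun) (M : col) : ida := Pow M (T (Lin M)).

(* Gamma(g)(A) = { g o a o g^{-1} | a in A }, h = g^{-1} *)
Definition Gam_map (M N : col) (g : pt M -> pt N) (h : pt N -> pt M)
  (A : (pt M -> pt M) -> Prop) : (pt N -> pt N) -> Prop :=
  fun f => exists a, A a /\ f = (fun x => g (a (h x))).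

Definition mu (M : col) (m : pt M) : (pt M -> pt M) -> Prop := single (sasaki M m).

(* Main.v *)
Require Import Defs.
From Stdlib Require Import ClassicalEpsilon FunctionalExtensionality PropExtensionality ProofIrrelevance.

Section OML.
Variable M : col.
Local Notation le := (ple M).
Local Notation oc := (poc M).

Lemma pt_eq (x y : pt M) : proj1_sig x = proj1_sig y -> x = y.
Proof. destruct x, y; simpl; intros ->; f_equal; apply proof_irrelevance. Qed.

Lemma le_refl x : le x x.
Proof. exact (coml_refl _ _ _ (cax M) _ (proj2_sig x)). Qed.
Lemma le_anti x y : le x y -> le y x -> x = y.
Proof. intros; apply pt_eq; exact (coml_anti _ _ _ (cax M) _ _ (proj2_sig x) (proj2_sig y) H H0). Qed.
Lemma le_trans x y z : le x y -> le y z -> le x z.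
Proof. intros; exact (coml_trans _ _ _ (cax M) _ _ _ (proj2_sig x) (proj2_sig y) (proj2_sig z) H H0). Qed.
Lemma oc_invol x : oc (oc x) = x.
Proof. apply pt_eq; exact (coml_oc_invol _ _ _ (cax M) _ (proj2_sig x)). Qed.
Lemma oc_anti x y : le x y -> le (oc y) (oc x).
Proof. intros; exact (coml_oc_anti _ _ _ (cax M) _ _ (proj2_sig x) (proj2_sig y) H). Qed.
Lemma le_oc_iff a b : le a (oc b) <-> le b (oc a).
Proof. split; intro H; apply oc_anti in H; rewrite oc_invol in H; exact H. Qed.
Lemma oc_le_iff a b : le (oc a) b <-> le (oc b) a.
Proof. split; intro H; apply oc_anti in H; rewrite oc_invol in H; exact H. Qed.

Lemma psup_ex (S : pt M -> Prop) : exists u, is_lub (fun _ => True) (ple M) S u.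
Proof.
  destruct (coml_lub _ _ _ (cax M) (fun c => exists p : pt M, S p /\ proj1_sig p = c))
    as [u [Du [Hub Hl]]].
  { intros x [p [_ <-]]; exact (proj2_sig p). }
  exists (exist _ u Du). split; [trivial|split].
  - intros x Sx. apply Hub. exists x; auto.
  - intros v _ Hv. apply Hl. apply (proj2_sig v). intros c [p [Sp <-]]. apply Hv; auto.
Qed.
Lemma psup_spec S : is_lub (fun _ => True) (ple M) S (psup M S).
Proof. unfold psup; apply epsilon_spec; apply psup_ex. Qed.
Lemma sup_ub S x : S x -> le x (psup M S).
Proof. apply (psup_spec S). Qed.
Lemma sup_le_iff S c : le (psup M S) c <-> forall x, S x -> le x c.
Proof.
  split.
  - intros H x Sx; eapply le_trans; [apply sup_ub; exact Sx| exact H].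
  - intros H; apply (psup_spec S); auto.
Qed.
Lemma eq_from_le x y : (forall c, le x c <-> le y c) -> x = y.
Proof. intros H; apply le_anti; [apply H, le_refl| apply H, le_refl]. Qed.
Lemma eq_from_ge x y : (forall c, le c x <-> le c y) -> x = y.
Proof. intros H; apply le_anti; [apply H, le_refl| apply H, le_refl]. Qed.
Lemma sup_ext A B : (forall z, A z <-> B z) -> psup M A = psup M B.
Proof. intros H; apply eq_from_le; intro c; rewrite !sup_le_iff; firstorder. Qed.
Lemma sup_single a : psup M (single a) = a.
Proof. apply eq_from_le; intro c; rewrite sup_le_iff; unfold single; split; intros H.
  apply H; reflexivity. intros x ->; exact H. Qed.
Lemma le_inf_iff S c : le c (pinf M S) <-> forall y, S y -> le c y.
Proof.
  unfold pinf; split.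
  - intros H y Sy. eapply le_trans; [exact H|]. apply sup_le_iff. intros x Hx; apply Hx, Sy.
  - intros H; apply sup_ub; exact H.
Qed.
Lemma le_top x : le x (ptop M).
Proof. apply sup_ub; trivial. Qed.
Lemma join2_le a b c : le (pjoin2 M a b) c <-> le a c /\ le b c.
Proof. unfold pjoin2; rewrite sup_le_iff; unfold pair2; split.
  intros H; split; apply H; auto. intros [] x [->| ->]; auto. Qed.
Lemma le_meet2 a b c : le c (pmeet2 M a b) <-> le c a /\ le c b.
Proof. unfold pmeet2; rewrite le_inf_iff; unfold pair2; split.
  intros H; split; apply H; auto. intros [] x [->| ->]; auto. Qed.
Lemma join2_comm a b : pjoin2 M a b = pjoin2 M b a.
Proof. apply eq_from_le; intro c; rewrite !join2_le; tauto. Qed.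

Lemma oc_top x z : le x z -> le (oc x) z -> le (ptop M) z.
Proof.
  intros H1 H2.
  assert (Ht : is_lub (cdom M) (cle M) (cdom M) (proj1_sig (ptop M))).
  { split; [exact (proj2_sig (ptop M))|split].
    - intros c Dc. exact (le_top (exist _ c Dc)).
    - intros v Dv Hv. change (le (ptop M) (exist _ v Dv)). apply sup_le_iff.
      intros y _. exact (Hv _ (proj2_sig y)). }
  destruct (coml_oc_top _ _ _ (cax M) _ _ (proj2_sig x) Ht) as [_ [_ Hl]].
  apply Hl. exact (proj2_sig z). intros c [-> | ->]; [exact H1|exact H2].
Qed.

Lemma orthomod x y : le x y -> y = pjoin2 M x (pmeet2 M y (oc x)).
Proof.
  intros Hxy. set (mm := pmeet2 M y (oc x)).
  assert (Hg : is_glb (cdom M) (cle M) (pair2 (proj1_sig y) (coc M (proj1_sig x))) (proj1_sig mm)).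
  { split; [exact (proj2_sig mm)|split].
    - intros c [-> | ->].
      + exact (proj1 (proj1 (le_meet2 y (oc x) mm) (le_refl mm))).
      + exact (proj2 (proj1 (le_meet2 y (oc x) mm) (le_refl mm))).
    - intros v Dv Hv. change (le (exist _ v Dv) mm). apply le_meet2. split.
      + apply Hv; left; reflexivity.
      + apply Hv; right; reflexivity. }
  destruct (coml_orthomod _ _ _ (cax M) _ _ _ (proj2_sig x) (proj2_sig y) Hxy Hg) as [_ [_ Hl]].
  apply le_anti.
  - apply Hl. exact (proj2_sig (pjoin2 M x mm)).
    intros c [-> | ->].
    + exact (proj1 (proj1 (join2_le x mm _) (le_refl _))).
    + exact (proj2 (proj1 (join2_le x mm _) (le_refl _))).
  - apply join2_le; split; [exact Hxy|]. exact (proj1 (proj1 (le_meet2 y (oc x) mm) (le_refl mm))).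
Qed.

Lemma demorgan1 a b : oc (pjoin2 M a b) = pmeet2 M (oc a) (oc b).
Proof. apply eq_from_ge; intro c. rewrite le_oc_iff, join2_le, le_meet2, !(le_oc_iff c). tauto. Qed.
Lemma demorgan2 a b : oc (pmeet2 M a b) = pjoin2 M (oc a) (oc b).
Proof. rewrite <- (oc_invol (pjoin2 M _ _)), demorgan1, !oc_invol. reflexivity. Qed.

Lemma om_dual b m : le b m -> pmeet2 M m (pjoin2 M (oc m) b) = b.
Proof.
  intros H. apply oc_anti in H. apply orthomod in H.
  rewrite <- (oc_invol b). rewrite H at 2.
  rewrite demorgan1, demorgan2, !oc_invol, (join2_comm b). reflexivity.
Qed.

Lemma join_ub_l a b : le a (pjoin2 M a b).
Proof. exact (proj1 (proj1 (join2_le a b _) (le_refl _))). Qed.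
Lemma join_ub_r a b : le b (pjoin2 M a b).
Proof. exact (proj2 (proj1 (join2_le a b _) (le_refl _))). Qed.
Lemma meet_lb_l a b : le (pmeet2 M a b) a.
Proof. exact (proj1 (proj1 (le_meet2 a b _) (le_refl _))). Qed.
Lemma meet_lb_r a b : le (pmeet2 M a b) b.
Proof. exact (proj2 (proj1 (le_meet2 a b _) (le_refl _))). Qed.
Lemma join_lub a b c : le a c -> le b c -> le (pjoin2 M a b) c.
Proof. intros; apply join2_le; auto. Qed.
Lemma meet_glb a b c : le c a -> le c b -> le c (pmeet2 M a b).
Proof. intros; apply le_meet2; auto. Qed.

Lemma sasaki_top m : sasaki M m (ptop M) = m.
Proof.
  unfold sasaki. apply le_anti. apply meet_lb_l.
  apply meet_glb. apply le_refl. eapply le_trans; [apply le_top|]. apply join_ub_r.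
Qed.
Lemma sasaki_le m x : le (sasaki M m x) m.
Proof. apply meet_lb_l. Qed.

Lemma oc_sasaki m y : oc (sasaki M m y) = pjoin2 M (oc m) (pmeet2 M m (oc y)).
Proof. unfold sasaki. rewrite demorgan2, demorgan1, oc_invol. reflexivity. Qed.

Lemma sasaki_L a m y : le a m -> (le a (oc y) <-> le a (oc (sasaki M m y))).
Proof.
  intros Ham. rewrite oc_sasaki. split; intros H.
  - eapply le_trans; [|apply join_ub_r]. apply meet_glb; auto.
  - assert (Hb : le (pmeet2 M m (oc y)) m) by apply meet_lb_l.
    apply om_dual in Hb. eapply le_trans; [|apply (meet_lb_r m)].
    rewrite <- Hb. apply meet_glb; auto.
Qed.

Lemma sasaki_adj m : adjoint M (sasaki M m) (sasaki M m).
Proof.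
  intros x y. rewrite (sasaki_L _ m y) by apply sasaki_le.
  rewrite le_oc_iff. rewrite <- (sasaki_L _ m x) by apply sasaki_le.
  apply le_oc_iff.
Qed.

Lemma sup_image_le {A : Type} (F : A -> pt M) S c :
  le (psup M (image F S)) c <-> forall f, S f -> le (F f) c.
Proof. rewrite sup_le_iff; unfold image; split.
  intros H f Sf; apply H; eauto. intros H x [f [Sf ->]]; auto. Qed.

Lemma adjoint_sym f g : adjoint M f g -> adjoint M g f.
Proof. intros H x y. rewrite le_oc_iff, <- (H y x), le_oc_iff. tauto. Qed.

Lemma adjoint_unique f g1 g2 : adjoint M f g1 -> adjoint M f g2 -> g1 = g2.
Proof.
  intros H1 H2. apply functional_extensionality; intro y.
  rewrite <- (oc_invol (g1 y)), <- (oc_invol (g2 y)). f_equal.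
  apply eq_from_ge; intro c. rewrite <- (H1 c y), <- (H2 c y); tauto.
Qed.

Lemma istar_spec f : idom (Lin M) f -> adjoint M f (istar (Lin M) f).
Proof. intros H. simpl. apply epsilon_spec. exact H. Qed.

Lemma adj_sup f g S : adjoint M f g -> f (psup M S) = psup M (image f S).
Proof.
  intros H. apply eq_from_le; intro c.
  rewrite <- (oc_invol c), (H _ (oc c)), sup_image_le, sup_le_iff.
  split; intros K x Sx; [apply H|apply (proj1 (H x _))]; auto.
Qed.

Lemma Lin_le_iff x y : ida_le (Lin M) x y <-> forall p, le (x p) (y p).
Proof.
  unfold ida_le; simpl. split.
  - intros H p. rewrite <- H. apply sup_ub. exists x; split; [left|]; reflexivity.
  - intros H. apply functional_extensionality; intro p. apply le_anti.
    + apply sup_image_le. intros f [-> | ->]; [apply H|apply le_refl].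
    + apply sup_ub. exists y; split; [right|]; reflexivity.
Qed.

Lemma Lin_join_adj S : sub_dom (Lin M) S ->
  adjoint M (ijoin (Lin M) S) (fun y => psup M (image (fun f => istar (Lin M) f y) S)).
Proof.
  intros HS x y. simpl ijoin. rewrite sup_image_le, le_oc_iff, sup_image_le.
  split; intros H f Sf.
  - apply le_oc_iff. apply (istar_spec f (HS f Sf)). auto.
  - apply (istar_spec f (HS f Sf)). apply le_oc_iff. auto.
Qed.

Lemma til_top f : itil (Lin M) f (ptop M) = oc (f (ptop M)).
Proof. simpl. apply sasaki_top. Qed.

Lemma Lin_mul_adj f gf g gg : adjoint M f gf -> adjoint M g gg ->
  adjoint M (fun z => f (g z)) (fun z => gg (gf z)).
Proof. intros Hx Hy a b. rewrite (Hx (g a) b), (Hy a (gf b)). tauto. Qed.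

Lemma til_def f : itil (Lin M) f = sasaki M (oc (f (ptop M))).
Proof. reflexivity. Qed.

Lemma join_app S p : ijoin (Lin M) S p = psup M (image (fun f => f p) S).
Proof. reflexivity. Qed.

Lemma join2_app a b p : ijoin (Lin M) (pair2 a b) p = pjoin2 M (a p) (b p).
Proof. rewrite join_app. unfold pjoin2. apply sup_ext; intro z; unfold image, pair2; split.
  intros [f [[-> | ->] ->]]; auto. intros [-> | ->]; eauto. Qed.

Lemma sup_pair2_ev (a b : pt M -> pt M) p :
  psup M (image (fun f => f p) (pair2 a b)) = pjoin2 M (a p) (b p).
Proof. apply join2_app. Qed.

Lemma Lin_is_ida : is_ida (Lin M).
Proof.
  split.
  - exists (fun x => x). intros x y; simpl; tauto.
  - intros x y [gx Hx] [gy Hy]. exists (fun z => gy (gx z)). intros a b; simpl.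
    rewrite (Hx (y a) b), (Hy a (gx b)). tauto.
  - intros x Hx. exists x. apply adjoint_sym, istar_spec, Hx.
  - intros x Hx. exists (itil (Lin M) x). apply sasaki_adj.
  - intros S HS. eexists. apply Lin_join_adj, HS.
  - intros x _. apply Lin_le_iff; intros; apply le_refl.
  - intros x y _ _ H1 H2. apply functional_extensionality; intro p.
    apply le_anti; [apply Lin_le_iff, H1|apply Lin_le_iff, H2].
  - intros x y z _ _ _ H1 H2. apply Lin_le_iff; intro p.
    eapply le_trans; [apply Lin_le_iff, H1|apply Lin_le_iff, H2].
  - intros S HS. split; [eexists; apply Lin_join_adj, HS|split].
    + intros x Sx. apply Lin_le_iff; intro p. apply sup_ub. exists x; auto.
    + intros v _ Hv. apply Lin_le_iff; intro p. apply sup_image_le.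
      intros f Sf. apply Lin_le_iff, Hv, Sf.
  - intros; reflexivity.
  - intros x S [g Hg] HS. apply functional_extensionality; intro p. simpl.
    rewrite (adj_sup _ _ _ Hg). apply sup_ext; intro z; unfold image; split.
    + intros [w [[f [Sf ->]] ->]]. exists (fun q => x (f q)); split; [exists f; auto|reflexivity].
    + intros [h [[f [Sf ->]] ->]]. exists (f p); split; [exists f; auto|reflexivity].
  - intros x S _ HS. apply functional_extensionality; intro p. simpl.
    apply sup_ext; intro z; unfold image; split.
    + intros [f [Sf ->]]. exists (fun q => f (x q)); split; [exists f; auto|reflexivity].
    + intros [h [[f [Sf ->]] ->]]. exists f; auto.
  - intros; reflexivity.
  - intros; reflexivity.
  - intros x Hx. apply (adjoint_unique (istar (Lin M) x)).
    + apply istar_spec. exists x. apply adjoint_sym, istar_spec, Hx.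
    + apply adjoint_sym, istar_spec, Hx.
  - intros x y Hx Hy. apply (adjoint_unique (imul (Lin M) x y)).
    + apply istar_spec. destruct Hx as [gx Hx], Hy as [gy Hy].
      eexists; apply (Lin_mul_adj _ _ _ _ Hx Hy).
    + simpl imul. apply Lin_mul_adj; apply istar_spec; auto.
  - intros S HS. apply (adjoint_unique (ijoin (Lin M) S)).
    + apply istar_spec. eexists; apply Lin_join_adj, HS.
    + replace (ijoin (Lin M) (image (istar (Lin M)) S)) with
        (fun y => psup M (image (fun f => istar (Lin M) f y) S)).
      apply Lin_join_adj, HS.
      apply functional_extensionality; intro y. rewrite join_app.
      apply sup_ext; intro z; unfold image; split.
      * intros [f [Sf ->]]. exists (istar (Lin M) f); split; eauto.
      * intros [h [[f [Sf ->]] ->]]. eauto.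
  - intros x y _ _. simpl itil. simpl imul. idtac.
    rewrite (sasaki_top (oc (sasaki M (oc (y (ptop M))) (ptop M)))).
    rewrite sasaki_top, !oc_invol. reflexivity.
  - intros S _. simpl itil. f_equal. f_equal. 
    apply sup_ext; intro z; unfold image; split.
    + intros [h [[f [Sf ->]] ->]]. exists f; split; auto. rewrite !sasaki_top, oc_invol; reflexivity.
    + intros [f [Sf ->]]. exists (itil (Lin M) (itil (Lin M) f)); split; eauto.
      simpl. rewrite !sasaki_top, oc_invol; reflexivity.
  - intros x Hx. apply (adjoint_unique (itil (Lin M) x)).
    + apply istar_spec. eexists; apply sasaki_adj.
    + apply sasaki_adj.
  - intros x y _ _. 
    simpl itil. simpl imul. rewrite !sup_pair2_ev.
    rewrite !sasaki_top, !oc_invol.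
    rewrite demorgan1, !oc_invol. reflexivity.
Qed.
End OML.

Lemma T_sasaki T (H1 : T1 T) M n : T (Lin M) (sasaki M n).
Proof.
  destruct (H1 (Lin M) (Lin_is_ida M)) as [Ht _]. apply Ht.
  exists (sasaki M (poc M n)). split.
  - exists (sasaki M (poc M n)); apply sasaki_adj.
  - rewrite til_def, sasaki_top, oc_invol. reflexivity.
Qed.

Lemma sup_ev_single M (f : pt M -> pt M) :
  psup M (image (fun a => a (ptop M)) (single f)) = f (ptop M).
Proof.
  rewrite <- (sup_single M (f (ptop M))). apply sup_ext; intro z; unfold image, single; split.
  intros [a [-> ->]]; reflexivity. intros ->; eauto.
Qed.

Lemma Gam_til T M A : itil (Gam T M) A =
  single (sasaki M (poc M (psup M (image (fun a => a (ptop M)) A)))).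
Proof. reflexivity. Qed.

Lemma Gam_til_single T M f : itil (Gam T M) (single f) = single (sasaki M (poc M (f (ptop M)))).
Proof. rewrite Gam_til, sup_ev_single. reflexivity. Qed.

Lemma single_inj {X} (a b : X) : single a = single b -> a = b.
Proof. intros H. assert (K : single a a) by reflexivity. rewrite H in K. exact K. Qed.

Lemma sasaki_inj M m n : sasaki M m = sasaki M n -> m = n.
Proof. intros H. rewrite <- (sasaki_top M m), H, sasaki_top. reflexivity. Qed.

Lemma iso_le M N g h : col_iso M N g h ->
  (forall m c, ple N (g m) c <-> ple M m (h c)) /\ (forall m c, ple N c (g m) <-> ple M (h c) m).
Proof.
  intros [hg [gh [Hle Hoc]]]. split; intros m c.
  - rewrite (Hle m (h c)), gh. tauto.
  - rewrite (Hle (h c) m), gh. tauto.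
Qed.

Lemma iso_join M N g h a b : col_iso M N g h -> g (pjoin2 M a b) = pjoin2 N (g a) (g b).
Proof.
  intros Hi. destruct (iso_le M N g h Hi) as [L1 _].
  apply eq_from_le; intro c. rewrite L1, !join2_le, !L1. tauto.
Qed.
Lemma iso_meet M N g h a b : col_iso M N g h -> g (pmeet2 M a b) = pmeet2 N (g a) (g b).
Proof.
  intros Hi. destruct (iso_le M N g h Hi) as [_ L2].
  apply eq_from_ge; intro c. rewrite L2, !le_meet2, !L2. tauto.
Qed.

Theorem theorem6p2 :
  forall T : Tfun, T1 T -> T2 T -> T3 T -> T4 T ->
  (* each mu_M is a COL-isomorphism M -> Psi(Gamma(M)) *)
  (forall M : col,
     (forall m : pt M, test (Gam T M) (mu M m)) /\
     (forall m n : pt M, mu M m = mu M n -> m = n) /\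
     (forall k, test (Gam T M) k -> exists m : pt M, mu M m = k) /\
     (forall m n : pt M, ple M m n <-> tle (Gam T M) (mu M m) (mu M n)) /\
     (forall m : pt M, mu M (poc M m) = itil (Gam T M) (mu M m))) /\
  (* naturality: Psi(Gamma(g)) o mu_M = mu_N o g *)
  (forall (M N : col) (g : pt M -> pt N) (h : pt N -> pt M),
     col_iso M N g h ->
     forall m : pt M, Gam_map M N g h (mu M m) = mu N (g m)).
Proof.
  intros T H1 H2 H3 H4. split.
  - intros M. split; [|split; [|split; [|split]]].
    + intros m. exists (single (sasaki M (poc M m))). split.
      * intros f Hf. unfold single in Hf; subst f. apply T_sasaki, H1.
      * rewrite Gam_til_single, sasaki_top, oc_invol. reflexivity.
    + intros m n H. apply single_inj, sasaki_inj in H. exact H.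
    + intros k [j [_ ->]]. eexists. unfold mu. rewrite Gam_til. reflexivity.
    + intros m n. unfold tle.
      rewrite (Gam_til T M (ijoin (Gam T M) _)), Gam_til_single, sasaki_top, oc_invol.
      match goal with |- context [single (sasaki M ?X)] => assert (E : X = pjoin2 M m n); [|rewrite E] end.
      { unfold pjoin2. apply sup_ext; intro z; unfold image, pair2, mu, single; simpl; split.
        - intros [f [[A [[-> | ->] Hf] ] ->]]; subst f; rewrite sasaki_top; auto.
        - intros [-> | ->].
          + exists (sasaki M m). split. exists (single (sasaki M m)). split; [left|]; reflexivity.
            rewrite sasaki_top; reflexivity.
          + exists (sasaki M n). split. exists (single (sasaki M n)). split; [right|]; reflexivity.
            rewrite sasaki_top; reflexivity. }
      unfold mu. split.
      * intros Hmn. f_equal. f_equal. apply le_anti.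
        apply join_lub; [exact Hmn| apply le_refl]. apply join_ub_r.
      * intros K. apply single_inj, sasaki_inj in K. rewrite <- K. apply join_ub_l.
    + intros m. unfold mu. rewrite Gam_til_single, sasaki_top. reflexivity.
  - intros M N g h Hi m. unfold Gam_map, mu, single.
    assert (K : (fun x => g (sasaki M m (h x))) = sasaki N (g m)).
    { apply functional_extensionality; intro x. unfold sasaki.
      destruct Hi as [hg [gh [Hle Hoc]]] eqn:E.
      rewrite (iso_meet M N g h _ _ Hi), (iso_join M N g h _ _ Hi), Hoc, gh. reflexivity. }
    apply functional_extensionality; intro f. apply propositional_extensionality. split.
    + intros [a [-> ->]]. exact K.
    + intros ->. exists (sasaki M m). split; [reflexivity| symmetry; exact K].
Qed.
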